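(* Let $I=\{i_1<i_2<\cdots<i_{2r}\}\subseteq[n]$ be a subset of even size. Then the word \[ \prod_{m=1}^{r} s_n\,(s_{n-2}s_{n-3}\cdots s_{i_{2m-1}})\,(s_{n-1}s_{n-2}\cdots s_{i_{2m}}) \] (where a run $s_a s_{a-1}\cdots s_b$ is empty if $a<b$) is a reduced expression for the unique element $w\in W$ of minimal length among all $u\in W$ with $\{i\in[n]: u(i)>n\}=I$; this $w$ is the minimal length representative of its right coset $W_{[n-1]}w$. Moreover, this word is a subword of $s_{i'_1}s_{i'_2}\cdots s_{i'_N}$, where the $m$-th factor is taken from the $m$-th group of blocks of that word.
   Context: The Weyl group $W$ of $\mathrm{SO}(2n)$ is the group of permutations $\sigma$ of $[2n]$ such that for each $i\in[n]$, $\sigma(n+i)\equiv n+\sigma(i)\pmod{2n}$ (with values in $[2n]$), and $|\{i\in[n]:\sigma(i)>n\}|$ is even; composition is $(\sigma\tau)(j)=\sigma(\tau(j))$. It is generated by $s_i=(i,i+1)(n+i,n+i+1)$ for $1\le i\le n-1$ and $s_n=(n,2n-1)(n-1,2n)$; length is with respect to these generators. $W_{[n-1]}=\langle s_1,\dots,s_{n-1}\rangle$. For $N=\binom n2$, $(i'_1,\dots,i'_N)$ is the sequence obtained by concatenating, for $m=1,\dots,\lfloor n/2\rfloor$ (the $m$-th group), the blocks ''$n$'', ''$n-2,n-3,\dots,2m-1$'', ''$n-1,n-2,\dots,2m$'' (empty runs if start $<$ end); $s_{i'_1}\cdots s_{i'_N}$ is a reduced word for the minimal coset representative of the longest eleme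nt. *)

(* Defs.v *)
(* Weyl group of SO(2n) (type D_n) acting on points 1..2n,
   elements represented as functions nat -> nat, compared on [1, 2n]. *)
From mathcomp Require Import all_boot.
Set Implicit Arguments. Unset Strict Implicit. Unset Printing Implicit Defensive.

Definition swap (a b j : nat) : nat :=
  if j == a then b else if j == b then a else j.

Definition sgen (n i : nat) : nat -> nat :=
  if i < n then swap i i.+1 \o swap (n + i) (n + i).+1
  else swap n (n.*2 - 1) \o swap (n - 1) n.*2.

Fixpoint wprod (n : nat) (w : seq nat) : nat -> nat :=
  if w is a :: w' then sgen n a \o wprod n w' else id.

Definition eqW (n : nat) (f g : nat -> nat) : Prop :=
  forall j, 0 < j <= n.*2 -> f j = g j.

Definition inW (n : nat) (s : nat -> nat) : Prop :=
  [/\ forall j, 0 < j <= n.*2 -> 0 < s j <= n.*2,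
      forall j k, 0 < j <= n.*2 -> 0 < k <= n.*2 -> s j = s k -> j = k,
      forall i, 0 < i <= n -> s (n + i) = n + s i %[mod n.*2]
    & ~~ odd (count (fun i => n < s i) (iota 1 n))].

Definition word_over (k : nat) (w : seq nat) : bool := all (fun i => 0 < i <= k) w.

Definition represents (n : nat) (w : seq nat) (s : nat -> nat) : Prop :=
  word_over n w /\ eqW n (wprod n w) s.

Definition has_length (n : nat) (s : nat -> nat) (k : nat) : Prop :=
  (exists2 w, represents n w s & size w = k) /\
  (forall w, represents n w s -> k <= size w).

Definition reduced (n : nat) (w : seq nat) : Prop :=
  word_over n w /\ has_length n (wprod n w) (size w).

Definition desc_set_is (n : nat) (s : nat -> nat) (I : seq nat) : Prop :=
  forall i, 0 < i <= n -> (n < s i) = (i \in I).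

Definition run (a b : nat) : seq nat := rev (iota b (a.+1 - b)).

(* i_k (1-based) for I = [:: i_1; ...; i_2r] *)
Definition iI (I : seq nat) (k : nat) : nat := nth 0 I k.-1.

Definition factorI (n : nat) (I : seq nat) (m : nat) : seq nat :=
  n :: run (n - 2) (iI I (m.*2 - 1)) ++ run (n - 1) (iI I m.*2).

Definition wordI (n : nat) (I : seq nat) : seq nat :=
  flatten [seq factorI n I m | m <- iota 1 (size I)./2].

(* m-th group of the word i'_1 ... i'_N *)
Definition groupD (n m : nat) : seq nat :=
  n :: run (n - 2) (m.*2 - 1) ++ run (n - 1) m.*2.

Definition longword (n : nat) : seq nat :=
  flatten [seq groupD n m | m <- iota 1 n./2].

(* Main.v *)
Require Import Defs.
From mathcomp Require Import all_boot zify.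
Set Implicit Arguments. Unset Strict Implicit. Unset Printing Implicit Defensive.

Definition sig n j := if j <= n then j + n else j - n.
Definition good n (u : nat -> nat) := [/\ forall j, 0<j<=n.*2 -> 0 < u j <= n.*2,
  forall j k, 0<j<=n.*2 -> 0<k<=n.*2 -> u j = u k -> j = k &
  forall j, 0<j<=n.*2 -> u (sig n j) = sig n (u j)].

Lemma good_id n : good n id.
Proof. by split. Qed.

Lemma good_comp n u v : good n u -> good n v -> good n (u \o v).
Proof.
case=> u1 u2 u3 [v1 v2 v3]; split=> /=.
- by move=> j /v1 /u1.
- by move=> j k Hj Hk /(u2 _ _ (v1 _ Hj) (v1 _ Hk)) /(v2 _ _ Hj Hk).
- by move=> j Hj; rewrite v3 // u3 // v1.
Qed.

Lemma good_sgen n i : 1 < n -> 0 < i <= n -> good n (sgen n i).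
Proof.
move=> Hn Hi; rewrite /good /sgen /sig /swap; split.
- move=> j Hj; case: ifP => H /=; repeat case: ifP; lia.
- move=> j k Hj Hk; case: ifP => H /=; repeat case: ifP; lia.
- move=> j Hj; case: ifP => H /=; repeat case: ifP; lia.
Qed.

Lemma good_wprod n x : 1 < n -> word_over n x -> good n (wprod n x).
Proof.
move=> Hn; elim: x => [|a x IH] /=; first by move=> _; apply: good_id.
case/andP=> Ha Hx; apply: good_comp; [exact: good_sgen | exact: IH].
Qed.

Definition key n v := if v <= n then n.*2.+1 - v else v - n.
Definition fpair n x y := (if x < y then 1 else 0) + (if x + y < n.*2.+1 then 1 else 0).
Definition tau n i c := if i < n then swap i i.+1 (swap (n.*2 - i) (n.*2 - i).+1 c)
  else swap n.+1 n.-1 (swap n.+2 n c).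
Definition uset (a b x y : nat) := (a = x /\ b = y) \/ (a = y /\ b = x).
Definition cand n i a b :=
  (i < n /\ (uset a b i i.+1 \/ uset a b (n.*2 - i) (n.*2 - i).+1 \/
             uset a b i (n.*2 - i) \/ uset a b i.+1 (n.*2 - i).+1)) \/
  (i = n /\ (uset a b n.+1 n.+2 \/ uset a b n n.+2 \/ uset a b n.-1 n.+1)).

Lemma key_range n v : 0 < v <= n.*2 -> 0 < key n v <= n.*2.
Proof. rewrite /key; case: ifP; lia. Qed.

Lemma key_inj n v w : 0 < v <= n.*2 -> 0 < w <= n.*2 -> key n v = key n w -> v = w.
Proof. rewrite /key; repeat case: ifP; lia. Qed.

Lemma key_sig n v : 0 < v <= n.*2 -> key n (sig n v) = n.*2.+1 - key n v.
Proof. rewrite /key /sig; repeat case: ifP; lia. Qed.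

Lemma key_le n v : 0 < v <= n.*2 -> (key n v <= n) = (n < v).
Proof. rewrite /key; case: ifP => H1 H2; apply/idP/idP; lia. Qed.

Lemma key_sgen n i v : 1 < n -> 0 < i <= n -> 0 < v <= n.*2 ->
  key n (sgen n i v) = tau n i (key n v).
Proof.
move=> Hn Hi Hv; rewrite /sgen /tau; case: ifP => H; rewrite /= /key /swap;
repeat case: ifP; lia.
Qed.


Ltac split_if := match goal with |- context [if ?b then _ else _] =>
  lazymatch b with context [if _ then _ else _] => fail | true => fail | false => fail | _ =>
  let E := fresh "E" in case E: b => /=; try done end end.
Ltac suset := first [left; split; lia | right; split; lia].
Ltac scand := first [ left; split; [lia|]; first [left; suset | right; left; suset | right; right; left; suset | right;right;right; suset]
                    | right; split; [lia|]; first [left; suset | right; left; suset | right; right; suset] ].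
Lemma inc_char1 n i a b : 1 < n -> 0 < i <= n -> 0 < a <= n.*2 -> 0 < b <= n.*2 ->
  a <> b -> a + b <> n.*2.+1 ->
  fpair n (tau n i a) (tau n i b) <= fpair n a b + 1.
Proof.
move=> Hn Hi Ha Hb Hab Hm; rewrite /fpair /tau.
(rewrite /swap; repeat split_if; lia).
Qed.
Lemma inc_char2 n i a b : 1 < n -> 0 < i <= n -> 0 < a <= n.*2 -> 0 < b <= n.*2 ->
  a <> b -> a + b <> n.*2.+1 ->
  (fpair n a b < fpair n (tau n i a) (tau n i b) -> cand n i a b).
Proof.
move=> Hn Hi Ha Hb Hab Hm; rewrite /fpair /tau.
(rewrite /swap; repeat split_if; move=> Hlt; first [exfalso; lia | scand]).
Qed.


Ltac dall := repeat match goal with H: _ \/ _ |- _ => destruct H | H: _ /\ _ |- _ => destruct H end.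
Lemma cand_uniq n i a b a2 b2 : 1 < n -> 0 < i <= n ->
  cand n i a b -> cand n i a2 b2 ->
  a + b <> n.*2.+1 -> a + a2 <> n.*2.+1 -> a + b2 <> n.*2.+1 ->
  b + a2 <> n.*2.+1 -> b + b2 <> n.*2.+1 -> a2 + b2 <> n.*2.+1 ->
  uset a b a2 b2.
Proof.
move=> Hn Hi C1 C2 *; rewrite /cand /uset in C1 C2 *.
dall; subst; first [left; split; lia | right; split; lia | exfalso; lia].
Qed.

Definition pairs n := [seq (q,p) | q <- iota 1 n, p <- iota q.+1 (n - q)].
Definition ell n (u : nat -> nat) :=
  \sum_(pr <- pairs n) fpair n (key n (u pr.1)) (key n (u pr.2)).

Lemma mem_pairs n q p : ((q,p) \in pairs n) = (0 < q < p) && (p <= n).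
Proof.
apply/allpairsPdep/idP.
- case=> x [y] [Hx Hy [-> ->]]; move: Hx Hy; rewrite !mem_iota; lia.
- move=> H; exists q, p; rewrite !mem_iota; split => //; lia.
Qed.

Lemma uniq_pairs n : uniq (pairs n).
Proof.
apply: allpairs_uniq_dep; first exact: iota_uniq.
- by move=> x _; exact: iota_uniq.
- by move=> [x y] [x' y'] _ _ /= [E1 E2]; subst.
Qed.

Lemma sum_le1 (T : eqType) (r : seq T) (F G : T -> nat) : uniq r ->
  {in r, forall x, G x <= F x + 1} ->
  {in r &, forall x y, F x < G x -> F y < G y -> x = y} ->
  \sum_(x <- r) G x <= \sum_(x <- r) F x + 1.
Proof.
elim: r => [|a r IH] /=; first by rewrite !big_nil.
case/andP=> Har Hu H1 H2; rewrite !big_cons.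
have H1' : {in r, forall x, G x <= F x + 1} by move=> x Hx; apply: H1; rewrite inE Hx orbT.
have H2' : {in r &, forall x y, F x < G x -> F y < G y -> x = y}.
  by move=> x y Hx Hy; apply: H2; rewrite inE ?Hx ?Hy orbT.
have [Hlt|Hge] := ltnP (F a) (G a).
- have : \sum_(x <- r) G x <= \sum_(x <- r) F x.
    rewrite big_seq [X in _ <= X]big_seq; apply: leq_sum => x Hx; rewrite leqNgt; apply/negP => Hx2.
    have Hx' : x \in a :: r by rewrite inE Hx orbT.
    have E := H2 a x (mem_head _ _) Hx' Hlt Hx2.
    by move: Har; rewrite E Hx.
  have := H1 a (mem_head _ _); lia.
- have := IH Hu H1' H2'; lia.
Qed.

Lemma sum_eq_pw (T : eqType) (r : seq T) (F G : T -> nat) :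
  {in r, forall x, F x <= G x} -> \sum_(x <- r) G x <= \sum_(x <- r) F x ->
  {in r, forall x, G x = F x}.
Proof.
elim: r => [|a r IH] //= H; rewrite !big_cons => Hs x.
have Ha := H a (mem_head _ _).
have Hr : {in r, forall x, F x <= G x} by move=> y Hy; apply: H; rewrite inE Hy orbT.
have Hs2 : \sum_(y <- r) F y <= \sum_(y <- r) G y.
  by rewrite big_seq [X in _ <= X]big_seq; apply: leq_sum => y Hy; apply: Hr. rewrite inE => /orP [/eqP ->|Hx]; first lia.
apply: IH => //; lia.
Qed.

Lemma sig_range n v : 0 < v <= n.*2 -> 0 < sig n v <= n.*2.
Proof. rewrite /sig; case: ifP; lia. Qed.

Lemma good_nomirror n u q p : good n u -> 0 < q <= n -> 0 < p <= n ->
  key n (u q) + key n (u p) <> n.*2.+1.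
Proof.
case=> H1 H2 H3 Hq Hp E.
have Hq2 : 0 < q <= n.*2 by lia.
have Hp2 : 0 < p <= n.*2 by lia.
have : key n (u p) = key n (u (sig n q)).
  rewrite H3 // key_sig //; last exact: H1.
  have := key_range (H1 _ Hq2); lia.
move/key_inj => /(_ (H1 _ Hp2) (H1 _ (sig_range Hq2))) /H2.
have := sig_range Hq2; rewrite /sig; case: ifP => Hle Hs /(_ Hp2 Hs); lia.
Qed.

Lemma good_keyinj n u q p : good n u -> 0 < q <= n.*2 -> 0 < p <= n.*2 ->
  key n (u q) = key n (u p) -> q = p.
Proof. case=> H1 H2 H3 Hq Hp /(key_inj (H1 _ Hq) (H1 _ Hp)); exact: H2. Qed.

Lemma ell_sgen n i u : 1 < n -> 0 < i <= n -> good n u ->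
  ell n (sgen n i \o u) <= ell n u + 1.
Proof.
move=> Hn Hi Hg; have [H1 _ _] := Hg.
rewrite /ell; apply: sum_le1; first exact: uniq_pairs.
- move=> [q p]; rewrite mem_pairs /= => Hqp.
  rewrite !key_sgen //; try (apply: H1; lia).
  apply: inc_char1 => //; try (apply: key_range; apply: H1; lia).
  + move/(good_keyinj Hg); lia.
  + apply: good_nomirror => //; lia.
- move=> [q p] [q2 p2]; rewrite !mem_pairs /= => Hqp Hqp2.
  rewrite !key_sgen //; try (apply: H1; lia).
  have R : forall j, 0 < j <= n -> 0 < key n (u j) <= n.*2.
    by move=> j Hj; apply: key_range; apply: H1; lia.
  have NM : forall j j', 0 < j <= n -> 0 < j' <= n -> key n (u j) + key n (u j') <> n.*2.+1.
    by move=> j j' Hj Hj'; apply: good_nomirror.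
  have KI : forall j j', 0 < j <= n -> 0 < j' <= n -> key n (u j) = key n (u j') -> j = j'.
    by move=> j j' Hj Hj' /(good_keyinj Hg); apply; lia.
  move=> /inc_char2 C1 /inc_char2 C2.
  have N1 : key n (u q) <> key n (u p) by move=> E; have := KI q p ltac:(lia) ltac:(lia) E; lia.
  have N2 : key n (u q2) <> key n (u p2) by move=> E; have := KI q2 p2 ltac:(lia) ltac:(lia) E; lia.
  have D1 := C1 Hn Hi (R q ltac:(lia)) (R p ltac:(lia)) N1 (NM q p ltac:(lia) ltac:(lia)).
  have D2 := C2 Hn Hi (R q2 ltac:(lia)) (R p2 ltac:(lia)) N2 (NM q2 p2 ltac:(lia) ltac:(lia)).
  have := cand_uniq Hn Hi D1 D2 (NM q p ltac:(lia) ltac:(lia)) (NM q q2 ltac:(lia) ltac:(lia))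
   (NM q p2 ltac:(lia) ltac:(lia)) (NM p q2 ltac:(lia) ltac:(lia)) (NM p p2 ltac:(lia) ltac:(lia))
   (NM q2 p2 ltac:(lia) ltac:(lia)).
  case=> [[E1 E2]|[E1 E2]].
  + by rewrite (KI q q2 ltac:(lia) ltac:(lia) E1) (KI p p2 ltac:(lia) ltac:(lia) E2).
  + have := KI q p2 ltac:(lia) ltac:(lia) E1; have := KI p q2 ltac:(lia) ltac:(lia) E2; lia.
Qed.

Lemma ell_id n : ell n id = 0.
Proof.
rewrite /ell big_seq big1 // => [[q p]]; rewrite mem_pairs /fpair /key /= => H.
repeat split_if; lia.
Qed.

Lemma ell_wprod n x : 1 < n -> word_over n x -> ell n (wprod n x) <= size x.
Proof.
move=> Hn; elim: x => [|a x IH] /=; first by rewrite ell_id.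
case/andP=> Ha Hx; have := ell_sgen Hn Ha (good_wprod Hn Hx); have := IH Hx; lia.
Qed.

Lemma ell_eqW n u v : eqW n u v -> ell n u = ell n v.
Proof.
move=> E; rewrite /ell big_seq [RHS]big_seq; apply: eq_bigr => [[q p]].
rewrite mem_pairs /= => H; rewrite !E //; lia.
Qed.

Definition Bsum n (I : seq nat) := \sum_(q <- I) (n - q).

Lemma filter_iota_perm n (I : seq nat) : uniq I -> all (fun i => 0 < i <= n) I ->
  perm_eq (filter (mem I) (iota 1 n)) I.
Proof.
move=> HU HA; apply: uniq_perm; [by rewrite filter_uniq // iota_uniq | done |].
move=> x; rewrite mem_filter mem_iota; apply/andP/idP => [[//]|Hx]; split=> //.
move/allP: HA => /(_ x Hx); lia.
Qed.

Lemma sum_gI n (I : seq nat) : uniq I -> all (fun i => 0 < i <= n) I ->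
  \sum_(pr <- pairs n) (if pr.1 \in I then 1 else 0) = Bsum n I.
Proof.
move=> HU HA; rewrite /pairs big_allpairs_dep /=.
under eq_bigr => q _ do rewrite big_const_seq count_predT size_iota iter_addn_0.
rewrite /Bsum -(perm_big _ (filter_iota_perm HU HA)) big_filter [RHS]big_mkcond /=.
by apply: eq_bigr => q _; case: ifP; rewrite ?mul0n ?mul1n.
Qed.

Lemma count_bound (s : seq nat) a b : uniq s -> {in s, forall x, a <= x < b} -> size s <= b - a.
Proof.
move=> Hu Hs; rewrite -(size_iota a (b - a)); apply: uniq_leq_size => // x Hx.
rewrite mem_iota; have := Hs x Hx; lia.
Qed.

Lemma count_formula (K : nat -> nat) n (P : pred nat) lo p :
 (forall j j', 0<j<=n.*2 -> 0<j'<=n.*2 -> K j = K j' -> j = j') ->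
 (forall j, 0<j<=n -> P j -> lo <= K j < lo + n) ->
 (forall j, 0<j<=n -> ~~ P j -> lo <= K (j + n) < lo + n) ->
 (forall q p, 0 < q < p -> p <= n -> P q -> P p -> K p < K q) ->
 (forall q p, 0<q<=n -> 0<p<=n -> P q -> ~~ P p -> K (p+n) < K q) ->
 0 < p <= n -> P p -> K p = lo + n - 1 - count P (iota 1 p.-1).
Proof.
move=> Kinj Krange Krange2 Hsame Hcross Hp Pp.
set L := map K (filter P (iota 1 p.-1)).
set R := map K (filter P (iota p (n - p.-1)) ++ map (addn^~ n) (filter (predC P) (iota 1 n))).
have HL : size L <= (lo + n) - (K p).+1.
  apply: count_bound.
  - rewrite map_inj_in_uniq ?filter_uniq ?iota_uniq // => x y.
    rewrite !mem_filter !mem_iota => /andP[_ Hx] /andP[_ Hy]; apply: Kinj; lia.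
  - move=> y /mapP [x]; rewrite mem_filter mem_iota => /andP [Px Hx] ->.
    have := Hsame x p ltac:(lia) ltac:(lia) Px Pp; have := Krange x ltac:(lia) Px; lia.
have HR : size R <= (K p).+1 - lo.
  apply: count_bound.
  - rewrite map_inj_in_uniq.
    + rewrite cat_uniq filter_uniq ?iota_uniq ?map_inj_uniq ?filter_uniq ?iota_uniq //=;
        last exact: addIn.
      rewrite andbT; apply/hasPn => y /mapP [x]; rewrite !mem_filter !mem_iota => /andP [_ Hx] ->.
      lia.
    + move=> x y Hx Hy; apply: Kinj; [move: Hx|move: Hy];
      rewrite mem_cat => /orP [|/mapP [z]]; rewrite ?mem_filter ?mem_iota;
      try (move=> /andP[_ ?]; lia); move=> /andP[_ ?] ->; lia.
  - move=> y /mapP [x Hx0 ->]; move: Hx0; rewrite mem_cat mem_filter mem_iota => /orP [/andP [Px Hx]|].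
    + have := Krange x ltac:(lia) Px; have := Krange p ltac:(lia) Pp.
      case: (ltngtP p x) => H; [have := Hsame p x ltac:(lia) ltac:(lia) Pp Px; lia | lia | subst; lia].
    + move/mapP => [z]; rewrite mem_filter mem_iota /= => /andP [Pz Hz] ->.
      have Pz' : ~~ P z by [].
      have := Krange2 z ltac:(lia) Pz'; have := Hcross p z ltac:(lia) ltac:(lia) Pp Pz'; lia.
have HS : size L + size R = n.
  rewrite /L /R !size_map size_cat size_map !size_filter.
  have E : iota 1 n = iota 1 p.-1 ++ iota (1 + p.-1) (n - p.-1) by rewrite -iotaD; congr iota; lia.
  have := count_predC P (iota 1 n); rewrite size_iota {1}E count_cat.
  have -> : 1 + p.-1 = p by lia.
  lia.
have := Krange p ltac:(lia) Pp; rewrite /L size_map size_filter in HL HS; lia.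
Qed.

Definition kf n (I : seq nat) p :=
  if p \in I then n - count (fun j => j \in I) (iota 1 p.-1)
  else n.*2 - count (fun j => j \notin I) (iota 1 p.-1).

Definition Kf n (u : nat -> nat) j := key n (u j).

Section Lower.
Variables (n : nat) (u : nat -> nat) (I : seq nat).
Hypotheses (Hn : 1 < n) (Hg : good n u) (Hd : desc_set_is n u I) (HU : uniq I)
  (HA : all (fun i => 0 < i <= n) I).

Local Notation K := (Kf n u).

Lemma K_range j : 0 < j <= n.*2 -> 0 < K j <= n.*2.
Proof. move=> Hj; rewrite /Kf; apply: key_range; case: Hg => H1 _ _; exact: H1. Qed.

Lemma K_neg j : 0 < j <= n -> (K j <= n) = (j \in I).
Proof.
move=> Hj; rewrite /Kf key_le ?Hd //; case: Hg => H1 _ _; apply: H1; lia.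
Qed.

Lemma K_mirror j : 0 < j <= n -> K (j + n) = n.*2.+1 - K j.
Proof.
move=> Hj; case: Hg => H1 _ H3.
have -> : j + n = sig n j by rewrite /sig; case: ifP; lia.
rewrite /Kf H3 ?key_sig //; [apply: H1 |]; lia.
Qed.

Lemma term_ge q p : 0 < q < p -> p <= n ->
  (if q \in I then 1 else 0) <= fpair n (K q) (K p).
Proof.
move=> H1 H2; have := K_neg (j := q) ltac:(lia); have := K_neg (j := p) ltac:(lia).
rewrite /fpair; case: (q \in I); case: (p \in I); repeat split_if; lia.
Qed.

Lemma ell_lower : Bsum n I <= ell n u.
Proof.
rewrite -sum_gI // /ell big_seq [X in _ <= X]big_seq; apply: leq_sum => [[q p]].
rewrite mem_pairs /= => H; apply: term_ge; lia.
Qed.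

Hypothesis Heq : ell n u <= Bsum n I.

Lemma term_eq q p : 0 < q < p -> p <= n ->
  fpair n (K q) (K p) = if q \in I then 1 else 0.
Proof.
move=> H1 H2.
have := @sum_eq_pw _ (pairs n) (fun pr => if pr.1 \in I then 1 else 0)
  (fun pr => fpair n (key n (u pr.1)) (key n (u pr.2))).
move=> /(_ _ _ (q, p)) /=; apply.
- by move=> [x y]; rewrite mem_pairs /= => H; apply: term_ge; lia.
- by rewrite sum_gI.
- rewrite mem_pairs; lia.
Qed.

Lemma K_nomirror q p : 0 < q <= n -> 0 < p <= n -> K q + K p <> n.*2.+1.
Proof. by move=> *; rewrite /Kf; apply: good_nomirror. Qed.

Lemma K_inj j j' : 0 < j <= n.*2 -> 0 < j' <= n.*2 -> K j = K j' -> j = j'.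
Proof. by rewrite /Kf => *; apply: (good_keyinj Hg). Qed.

Lemma K_cross q p : 0 < q <= n -> 0 < p <= n -> q \in I -> p \notin I ->
  n.*2.+1 < K q + K p.
Proof.
move=> Hq Hp Iq Ip.
have := K_neg Hq; have := K_neg Hp; rewrite Iq (negbTE Ip) => Np Nq.
have := K_nomirror Hq Hp; have := K_range (j := q) ltac:(lia); have := K_range (j := p) ltac:(lia).
case: (ltngtP q p) => H.
- have := term_eq (q := q) (p := p) ltac:(lia) ltac:(lia); rewrite Iq /fpair.
  repeat split_if; lia.
- have := term_eq (q := p) (p := q) ltac:(lia) ltac:(lia); rewrite (negbTE Ip) /fpair.
  repeat split_if; lia.
- by subst; rewrite Iq in Ip.
Qed.

Lemma key_formula p : 0 < p <= n -> K p = kf n I p.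
Proof.
move=> Hp; rewrite /kf; case: ifP => Ip.
- have := @count_formula K n (fun j => j \in I) 1 p K_inj.
  have -> : 1 + n - 1 = n by lia.
  apply => //.
  + move=> j Hj /= Ij; have := K_neg Hj; have := K_range (j := j) ltac:(lia); rewrite Ij; lia.
  + move=> j Hj /= Ij; rewrite K_mirror //; have := K_neg Hj; have := K_range (j := j) ltac:(lia).
    rewrite (negbTE Ij); lia.
  + move=> q p' H1 H2 /= Iq Ip'; have := term_eq H1 H2; rewrite Iq /fpair.
    have := K_neg (j := q) ltac:(lia); have := K_neg (j := p') ltac:(lia); rewrite Iq Ip'.
    have := K_inj (j := q) (j' := p') ltac:(lia) ltac:(lia).
    repeat split_if; lia.
  + move=> q p' Hq Hp' /= Iq Ip'; rewrite K_mirror; last lia. have := K_cross Hq Hp' Iq Ip'. have := K_range (j := p') ltac:(lia); lia.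
- have := @count_formula K n (fun j => j \notin I) n.+1 p K_inj.
  have -> : n.+1 + n - 1 = n.*2 by lia.
  apply => //=; last by rewrite Ip.
  + move=> j Hj /= Ij; have := K_neg Hj; have := K_range (j := j) ltac:(lia); rewrite (negbTE Ij); lia.
  + move=> j Hj /= Ij; rewrite K_mirror //; have := K_neg Hj; have := K_range (j := j) ltac:(lia).
    rewrite negbK in Ij; rewrite Ij; lia.
  + move=> q p' H1 H2 /= Iq Ip'; have := term_eq H1 H2; rewrite (negbTE Iq) /fpair.
    have := K_inj (j := q) (j' := p') ltac:(lia) ltac:(lia).
    repeat split_if; lia.
  + move=> q p' Hq Hp' /= Iq Ip'; rewrite negbK in Ip'; rewrite K_mirror //.
    have := K_cross Hp' Hq Ip' Iq; have := K_range (j := p') ltac:(lia); have := K_range (j := q) ltac:(lia); lia.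
Qed.

End Lower.

Lemma wprod_cat n x y j : wprod n (x ++ y) j = wprod n x (wprod n y j).
Proof. by elim: x => [|a x IH] //=; rewrite IH. Qed.

Definition cyc b d y := if y < b then y else if y == b then b + d else if y <= b + d then y.-1 else y.

Lemma run_val n b d y : 0 < b -> b + d <= n -> 0 < y <= n ->
  wprod n (rev (iota b d)) y = cyc b d y.
Proof.
move=> Hb; elim: d => [|d IH] Hd Hy.
- by rewrite /cyc /=; repeat split_if; lia.
- rewrite -addn1 iotaD rev_cat /= IH //; last lia.
  rewrite /sgen /cyc /swap; repeat split_if; lia.
Qed.

Definition Fv n a b y := if y < a then y else if y == a then n.*2 else if y < b then y.-1
  else if y == b then n.*2 - 1 else y - 2.

Definition factor n a b := n :: run (n - 2) a ++ run (n - 1) b.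

Lemma F_val n a b y : 1 < n -> 0 < a < b -> b <= n -> 0 < y <= n ->
  wprod n (factor n a b) y = Fv n a b y.
Proof.
move=> Hn Hab Hb Hy; rewrite /factor /= wprod_cat /run.
rewrite (run_val (n := n) (b := b)) //; try lia.
rewrite (run_val (n := n) (b := a)); try lia; last by rewrite /cyc; repeat split_if; lia.
rewrite /sgen /cyc /Fv /swap; repeat split_if; lia.
Qed.

Lemma wordI_cons n a b J : wordI n [:: a, b & J] = factor n a b ++ wordI n J.
Proof.
rewrite /wordI /=.
congr (_ :: _ ++ _).
rewrite -[2]/(1 + 1) (iotaDl 1 1) -map_comp; congr flatten; apply/eq_in_map => m; rewrite mem_iota => Hm /=.
rewrite /factorI /iI.
have -> : ((1 + m).*2 - 1).-1 = ((m.*2 - 1).-1).+2 by lia.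
by have -> : ((1 + m).*2).-1 = ((m.*2).-1).+2 by lia.
Qed.

Lemma size_run c b : size (run c b) = c.+1 - b.
Proof. by rewrite /run size_rev size_iota. Qed.

Definition Ccan n (I : seq nat) p :=
  if p \in I then n.*2 - count (fun q => q < p) I else p - count (fun q => q < p) I.

Lemma count_lt_bound (J : seq nat) b p : sorted ltn J -> all (fun x => b < x) J ->
  count (fun q => q < p) J <= p - b.+1.
Proof.
move=> HS HA; rewrite -size_filter; apply: count_bound.
- by rewrite filter_uniq // (sorted_uniq ltn_trans ltnn).
- move=> x; rewrite mem_filter => /andP [H1 H2]; move/allP: HA => /(_ x H2); lia.
Qed.

Lemma size_wordI n I : 1 < n -> sorted ltn I -> all (fun i => 0 < i <= n) I -> ~~ odd (size I) ->
  size (wordI n I) = Bsum n I.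
Proof.
move=> Hn; move: {2}(size I) (leqnn (size I)) => k; elim: k I => [|k IH] [|a [|b J]] Hk HS HA Hodd;
  try by move: Hodd.
all: try by rewrite /wordI /Bsum big_nil.
all: try by move: Hk.
- move: HS HA Hodd => /andP [Hab HS] /and3P [Ha Hb HA] Hodd.
  rewrite /= in Hk; rewrite wordI_cons size_cat IH //; first last.
  + by move: Hodd; rewrite negbK.
  + exact: path_sorted HS.
  + lia.
  rewrite /factor -cat1s !size_cat !size_run /Bsum !big_cons /=; lia.
Qed.

Lemma wordI_val n I : 1 < n -> sorted ltn I -> all (fun i => 0 < i <= n) I -> ~~ odd (size I) ->
  forall p, 0 < p <= n -> wprod n (wordI n I) p = Ccan n I p.
Proof.
move=> Hn; move: {2}(size I) (leqnn (size I)) => k; elim: k I => [|k IH] [|a [|b J]] Hk HS HA Hodd;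
  try by move: Hodd.
all: try by move=> p Hp; rewrite /Ccan /=; lia.
all: try by move: Hk.
- move: HS HA Hodd => /andP [Hab HS] /and3P [Ha Hb HA] Hodd p Hp.
  have HSJ : sorted ltn J by exact: path_sorted HS.
  have HJb : all (fun x => b < x) J.
    by have := order_path_min ltn_trans HS.
  have Hab' : a < b by [].
  have Hodd' : ~~ odd (size J) by move: Hodd; rewrite negbK.
  rewrite /= in Hk; rewrite wordI_cons wprod_cat IH //; last lia.
  have Hcb := count_lt_bound p HSJ HJb.
  have HF : forall y, 0 < y <= n -> wprod n (factor n a b) y = Fv n a b y.
    by move=> y Hy; apply: F_val => //; lia.
  have Hgood : good n (wprod n (factor n a b)).
    apply: good_wprod => //=; rewrite /word_over /= all_cat; apply/and3P; split; first lia.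
    + by apply/allP => x; rewrite /run mem_rev mem_iota; lia.
    + by apply/allP => x; rewrite /run mem_rev mem_iota; lia.
  rewrite /Ccan !inE.
  case: (boolP (p \in J)) => Hpj.
  + have Hpb : b < p by move/allP: HJb => /(_ p Hpj).
    have E : n.*2 - count (fun q => q < p) J = sig n (n - count (fun q => q < p) J).
      by rewrite /sig; case: ifP; lia.
    case: Hgood => _ _ H3; rewrite E H3; last lia.
    rewrite HF; last lia.
    rewrite /Fv /sig orbT /=; repeat split_if; lia.
  + rewrite orbF HF; last lia.
    rewrite /Fv /=; repeat split_if; lia.
Qed.

Lemma wo_wordI n I : 1 < n -> sorted ltn I -> all (fun i => 0 < i <= n) I -> ~~ odd (size I) ->
  word_over n (wordI n I).
Proof.
move=> Hn; move: {2}(size I) (leqnn (size I)) => k; elim: k I => [|k IH] [|a [|b J]] Hk HS HA Hodd;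
  try by move: Hodd.
all: try by rewrite /wordI.
all: try by move: Hk.
move: HS HA Hodd => /andP [Hab HS] /and3P [Ha Hb HA] Hodd.
rewrite /= in Hk; rewrite wordI_cons /word_over all_cat; apply/andP; split.
- rewrite /factor /= all_cat; apply/and3P; split; first lia.
  + by apply/allP => x; rewrite /run mem_rev mem_iota; lia.
  + by apply/allP => x; rewrite /run mem_rev mem_iota; lia.
- apply: IH => //; [lia | exact: path_sorted HS | by move: Hodd; rewrite negbK].
Qed.

Lemma Ccan_desc n I p : sorted ltn I -> all (fun i => 0 < i <= n) I -> 0 < p <= n ->
  (n < Ccan n I p) = (p \in I).
Proof.
move=> HS HA Hp; have := count_lt_bound (b := 0) p HS.
have H0 : all (fun x => 0 < x) I by apply/allP => x /(allP HA); lia.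
move/(_ H0) => Hc; rewrite /Ccan; case: ifP => _; lia.
Qed.

Lemma eqW_good n u v : good n u -> good n v -> (forall p, 0 < p <= n -> u p = v p) -> eqW n u v.
Proof.
case=> _ _ Hu [_ _ Hv] H j Hj; case: (leqP j n) => Hjn; first (apply: H; lia).
have -> : j = sig n (j - n) by rewrite /sig; case: ifP; lia.
rewrite Hu ?Hv ?H //; lia.
Qed.

Lemma eqW_sym n u v : eqW n u v -> eqW n v u.
Proof. by move=> H j Hj; rewrite H. Qed.
Lemma eqW_trans n u v w : eqW n u v -> eqW n v w -> eqW n u w.
Proof. by move=> H1 H2 j Hj; rewrite H1 ?H2. Qed.

Lemma desc_eqW n u v I : eqW n u v -> desc_set_is n v I -> desc_set_is n u I.
Proof. by move=> E D i Hi; rewrite E ?D //; lia. Qed.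

Section Main.
Variables (n : nat) (I : seq nat).
Hypotheses (Hn : 1 < n) (HS : sorted ltn I) (HA : all (fun i => 0 < i <= n) I)
  (Hodd : ~~ odd (size I)).

Let w := wprod n (wordI n I).

Lemma HU : uniq I.
Proof. by rewrite (sorted_uniq ltn_trans ltnn). Qed.

Lemma w_good : good n w.
Proof. apply: good_wprod => //; exact: wo_wordI. Qed.

Lemma w_desc : desc_set_is n w I.
Proof. move=> i Hi; rewrite /w wordI_val //; exact: Ccan_desc. Qed.

Lemma mainM x : word_over n x -> desc_set_is n (wprod n x) I ->
  size (wordI n I) <= size x /\ (size x = size (wordI n I) -> eqW n (wprod n x) w).
Proof.
move=> Hx Hd; have Hg := good_wprod Hn Hx.
have L1 := ell_wprod Hn Hx.
have L2 := ell_lower Hn Hg Hd HU HA.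
rewrite size_wordI //; split; first lia.
move=> Hsz.
have E1 : ell n (wprod n x) <= Bsum n I by lia.
have E2 : ell n w <= Bsum n I.
  by rewrite -size_wordI //; apply: ell_wprod => //; exact: wo_wordI.
apply: eqW_good => // [|p Hp]; first exact: w_good.
have := key_formula Hn Hg Hd HU HA E1 Hp.
have := key_formula Hn w_good w_desc HU HA E2 Hp.
rewrite /Kf => <-; case: Hg => H1 _ _; case: w_good => H1' _ _.
apply: key_inj; [apply: H1 | apply: H1']; lia.
Qed.

End Main.

Lemma wo_pred n v : word_over n.-1 v -> word_over n v.
Proof. by move/allP=> H; apply/allP => x /H; lia. Qed.

Lemma wprod_side n v : 1 < n -> word_over n.-1 v -> forall j, 0 < j <= n.*2 ->
  (n < wprod n v j) = (n < j).
Proof.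
move=> Hn; elim: v => [|a v IH] //= /andP [Ha Hv] j Hj.
have [H1 _ _] := good_wprod Hn (wo_pred Hv).
have := H1 j Hj; rewrite -(IH Hv j Hj).
move: (wprod n v j) => z Hz.
rewrite /sgen ifT; last lia.
rewrite /= /swap; apply/idP/idP; repeat split_if; lia.
Qed.

Lemma nth_gt (I : seq nat) b k : sorted ltn I -> all (fun x => b < x) I -> k < size I ->
  b + k < nth 0 I k.
Proof.
elim: I b k => [|a I IH] b k //= HS /andP [Ha HA] Hk.
case: k Hk => [|k] Hk /=; first lia.
have HA' : all (fun x => a < x) I by exact: order_path_min ltn_trans HS.
have := IH a k (path_sorted HS) HA' ltac:(lia); lia.
Qed.

Lemma run_sub c x y : y <= x -> subseq (run c x) (run c y).
Proof.
move=> Hxy; rewrite /run subseq_rev.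
case: (leqP x c.+1) => Hx.
- have -> : c.+1 - y = (x - y) + (c.+1 - x) by lia.
  rewrite iotaD; have -> : y + (x - y) = x by lia.
  exact: suffix_subseq.
- have -> : c.+1 - x = 0 by lia.
  exact: sub0seq.
Qed.

Lemma flatten_sub (T : eqType) (s : seq nat) (f g : nat -> seq T) :
  {in s, forall m, subseq (f m) (g m)} ->
  subseq (flatten (map f s)) (flatten (map g s)).
Proof.
elim: s => [|a s IH] //= H; apply: cat_subseq; first by apply: H; rewrite mem_head.
by apply: IH => m Hm; apply: H; rewrite inE Hm orbT.
Qed.

Theorem lemma4 (n : nat) (I : seq nat) :
  2 <= n ->
  sorted ltn I -> all (fun i => 0 < i <= n) I -> ~~ odd (size I) ->
  [/\ inW n (wprod n (wordI n I)),
      desc_set_is n (wprod n (wordI n I)) I,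
      reduced n (wordI n I)
    & [/\       (* w is the unique element of minimal length among u in W with {i : u(i) > n} = I *)
      (forall u, inW n u -> desc_set_is n u I ->
         forall k, has_length n u k ->
           size (wordI n I) <= k /\
           (k = size (wordI n I) -> eqW n u (wprod n (wordI n I)))),
      (* w is the minimal length representative of W_[n-1] w *)
      (forall v, word_over n.-1 v ->
         forall k, has_length n (wprod n v \o wprod n (wordI n I)) k ->
           size (wordI n I) <= k /\
           (k = size (wordI n I) ->
              eqW n (wprod n v \o wprod n (wordI n I)) (wprod n (wordI n I)))),
      (* the m-th factor is a subword of the m-th group *)
      (forall m, 0 < m <= (size I)./2 -> subseq (factorI n I m) (groupD n m))
    & subseq (wordI n I) (longword n)]].
Proof.
move=> Hn HS HA Hodd.
have Hg := w_good Hn HS HA Hodd.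
have Hd := w_desc Hn HS HA Hodd.
have HM := mainM Hn HS HA Hodd.
have HU' := HU HS.
have Hwo := wo_wordI Hn HS HA Hodd.
have Hfac : forall m, 0 < m <= (size I)./2 -> subseq (factorI n I m) (groupD n m).
  move=> m /andP [Hm0 Hm1]; move: Hm1; rewrite geq_half_double => Hm1; rewrite /factorI /groupD /= eqxx; apply: cat_subseq; apply: run_sub;
  rewrite /iI.
  + have H0 : all (fun x => 0 < x) I by apply/allP => x /(allP HA); lia.
    have := nth_gt (k := (m.*2 - 1).-1) HS H0; lia.
  + have H0 : all (fun x => 0 < x) I by apply/allP => x /(allP HA); lia.
    have := nth_gt (k := (m.*2).-1) HS H0; lia.
split.
- case: Hg => H1 H2 H3; split => //.
  + move=> i Hi; rewrite -[n + i]/(n + i) (_ : n + i = sig n i); last by rewrite /sig; case: ifP; lia.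
    rewrite H3; last lia.
    have := H1 i ltac:(lia); rewrite /sig; case: ifP => H Hr; first by rewrite addnC.
    by rewrite (_ : n + _ = (wprod n (wordI n I) i - n) + n.*2) ?modnDr //; lia.
  + rewrite (eq_in_count (a2 := fun i => i \in I)); last first.
      by move=> i; rewrite mem_iota => Hi; apply: Hd; lia.
    by rewrite -size_filter (perm_size (filter_iota_perm HU' HA)).
- exact: Hd.
- split => //; split.
  + by exists (wordI n I) => //; split.
  + move=> x [Hx E]; apply: (proj1 (HM x Hx _)); exact: desc_eqW E Hd.
- split => //.
  + move=> u Hu Hdu k [[x [Hx E] Hs] _]; subst k.
    have [H1 H2] := HM x Hx (desc_eqW E Hdu); split => // Hk.
    exact: eqW_trans (eqW_sym E) (H2 Hk).
  + move=> v Hv k [[x [Hx E] Hs] _]; subst k.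
    have Hdv : desc_set_is n (wprod n v \o wprod n (wordI n I)) I.
      move=> i Hi /=; case: Hg => H1 _ _; rewrite (wprod_side Hn Hv); [exact: Hd | apply: H1; lia].
    have [H1 H2] := HM x Hx (desc_eqW E Hdv); split => // Hk.
    exact: eqW_trans (eqW_sym E) (H2 Hk).
  + rewrite /wordI /longword.
    have Hsz : size I <= n.
      rewrite -(size_iota 1 n); apply: uniq_leq_size => // x Hx; rewrite mem_iota.
      move/allP: HA => /(_ x Hx); lia.
    have Hh : (size I)./2 <= n./2 by apply: half_leq.
    have -> : n./2 = (size I)./2 + (n./2 - (size I)./2) by lia.
    rewrite iotaD map_cat flatten_cat -[X in subseq X _]cats0; apply: cat_subseq; last exact: sub0seq.
    apply: flatten_sub => m; rewrite mem_iota => Hm; apply: Hfac; lia.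
Qed.
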